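(* For $n\ge1$ let $Z_n$ be the balanced Thick-$\mathcal{Z}$ graph with $|U_1|=|V_1|=|U_2|=|V_2|=n$. When the edges of $Z_n$ are revealed one by one in a uniformly random order to the greedy algorithm, the expected size of the resulting matching is $\left(\frac12+o(1)\right)|\textsc{OPT}|$ as $n\to\infty$, where $\textsc{OPT}$ is a maximum matching of $Z_n$.
   Context: A Thick-$\mathcal{Z}$ graph is a bipartite graph with sides $U_1\cup U_2$ and $V_1\cup V_2$ (disjoint sets), $|U_1|=|V_1|$, $|U_2|=|V_2|$, whose edge set is the union of a perfect matching between $U_1$ and $V_1$, a perfect matching between $U_2$ and $V_2$, and the complete bipartite graph between $U_2$ and $V_1$; it is balanced if additionally $|U_1|=|V_2|$. The greedy algorithm adds an arriving edge whenever the current set plus that edge is a matching. *)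

(* Defs.v *)
From HB Require Import structures.
From mathcomp Require Import all_boot all_order all_algebra.
From mathcomp Require Import all_classical all_reals all_analysis.
Set Implicit Arguments. Unset Strict Implicit. Unset Printing Implicit Defensive.
Import Order.TTheory GRing.Theory Num.Theory.

(* Vertices on each side: ('I_2 * 'I_n).  Left side: (0,i) in U_1, (1,i) in U_2.
   Right side: (0,i) in V_1, (1,i) in V_2.  An edge is a pair (left, right). *)
Definition vtx (n : nat) := ('I_2 * 'I_n)%type.
Definition edge (n : nat) := (vtx n * vtx n)%type.

(* Balanced Thick-Z graph Z_n: perfect matching U_1-V_1 (u_i v_i), perfect
   matching U_2-V_2 (u'_i v'_i), and complete bipartite U_2 x V_1. *)
Definition Zedge (n : nat) (e : edge n) : bool :=
  let: ((a, i), (b, j)) := e in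
  [|| (nat_of_ord a == 0) && (nat_of_ord b == 0) && (i == j),
      (nat_of_ord a == 1) && (nat_of_ord b == 1) && (i == j)
    | (nat_of_ord a == 1) && (nat_of_ord b == 0)].

Definition Zedges (n : nat) : {set edge n} := [set e | Zedge e].

Definition is_matching n (M : {set edge n}) : bool :=
  [forall e1 in M, forall e2 in M, (e1 != e2) ==> ((e1.1 != e2.1) && (e1.2 != e2.2))].

Definition opt_size (n : nat) : nat :=
  \max_(M : {set edge n} | (M \subset Zedges n) && is_matching M) #|M|.

Definition greedy_step n (M : {set edge n}) (e : edge n) : {set edge n} :=
  if is_matching (e |: M) then e |: M else M.

Definition greedy n (s : seq (edge n)) : {set edge n} := foldl (@greedy_step n) finset.set0 s.

Definition orders (n : nat) : seq (seq (edge n)) := permutations (enum (Zedges n)).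

Definition expected_greedy (R : realType) (n : nat) : R :=
  (\sum_(s <- orders n) (#|greedy s|%:R : R)) / (size (orders n))%:R.

(* Main.v *)
Require Import Defs.
From HB Require Import structures.
From mathcomp Require Import all_boot all_order all_algebra.
From mathcomp Require Import zify.
From Stdlib Require Import Lia.
Set Implicit Arguments. Unset Strict Implicit. Unset Printing Implicit Defensive.

Section Before.
Variable T : eqType.
Variables X Y : pred T.
Hypothesis XY : forall x, X x -> Y x -> false.

Fixpoint before (s : seq T) : bool :=
  if s is x :: t then (if X x then before t else if Y x then ~~ has X t else before t)
  else true.

Lemma count_allpairs (a : pred (seq T)) (s : seq T) (f : T -> seq (seq T)) :
  count a [seq x :: t | x <- s, t <- f x] = \sum_(x <- s) count (fun t => a (x :: t)) (f x).
Proof.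
elim: s => [|x s IH]; first by rewrite big_nil.
by rewrite /= count_cat IH big_cons count_map.
Qed.

Lemma sum3 (l : seq T) al be ga :
  \sum_(x <- l) (if X x then al else if Y x then be else ga) =
  count X l * al + count Y l * be + count (fun x => ~~ X x && ~~ Y x) l * ga.
Proof.
elim: l => [|x l IH]; first by rewrite big_nil.
rewrite big_cons IH /=.
case: (boolP (X x)) => hx; case: (boolP (Y x)) => hy //=.
- by have := XY hx hy.
- lia.
- lia.
- lia.
Qed.

Lemma count_before (n : nat) (l : seq T) : size l = n -> uniq l ->
  count before (permutations l) * (count X l + count Y l)`! =
  (size l)`! * (count X l)`! * (count Y l)`!.
Proof.
elim: n l => [|n IH] l.
  by case: l => // _ _; rewrite /=.
move=> sl ul.
have l0 : 0 < size l by rewrite sl.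
rewrite (permP (permutationsE l0)) (undup_id ul) count_allpairs.
set a := count X l; set b := count Y l.
set c := count (fun x => ~~ X x && ~~ Y x) l.
have abc : a + b + c = size l.
  have := sum3 l 1 1 1; rewrite !muln1 => <-.
  by rewrite (eq_bigr (fun _ => 1)) ?sum1_size // => x _; case: ifP => //; case: ifP.
have key : forall x, x \in l ->
   count (fun t => before (x :: t)) (permutations (rem x l)) * (a + b)`! =
   if X x then (a + b) * (n`! * (a.-1)`! * b`!)
   else if Y x then (a == 0) * (n`! * a`! * b`!) else n`! * a`! * b`!.
  move=> x xl.
  have srem : size (rem x l) = n by rewrite size_rem // sl.
  have urem : uniq (rem x l) by rewrite rem_uniq.
  have cX := count_rem x X l; have cY := count_rem x Y l.
  rewrite xl /= in cX cY.
  have IHx := IH _ srem urem.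
  case: (boolP (X x)) => hx.
    have hy : ~~ Y x by apply/negP => hy; have := XY hx hy.
    rewrite (eq_count (a2 := before)); last by move=> t /=; rewrite hx.
    rewrite cX cY hx (negbTE hy) subn0 subn1 in IHx.
    rewrite srem in IHx.
    have a0 : 0 < a by rewrite /a -has_count; apply/hasP; exists x.
    have -> : a + b = (a.-1 + b).+1 by rewrite -addSn prednK.
    by rewrite factS mulnCA IHx mulnA.
  case: (boolP (Y x)) => hy.
    rewrite (eq_count (a2 := fun t => ~~ has X t)); last by move=> t /=; rewrite (negbTE hx) hy.
    have hr : has X (rem x l) = has X l.
      rewrite !has_count cX (negbTE hx) subn0 //.
    case: (boolP (a == 0)) => a0.
      rewrite (eqP a0) add0n fact0 muln1 mul1n.
      rewrite (eq_in_count (a2 := predT)); last first.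
        move=> t; rewrite mem_permutations => pt.
        by rewrite (perm_has _ pt) hr has_count -/a (eqP a0).
      by rewrite count_predT size_permutations // srem.
    rewrite (eq_in_count (a2 := pred0)); first by rewrite count_pred0.
    move=> t; rewrite mem_permutations => pt.
    by rewrite (perm_has _ pt) hr has_count -/a lt0n a0.
  rewrite (eq_count (a2 := before)); last by move=> t /=; rewrite (negbTE hx) (negbTE hy).
  rewrite cX cY (negbTE hx) (negbTE hy) !subn0 srem in IHx.
  by rewrite IHx.
rewrite big_distrl /= (eq_big_seq _ key) sum3.
rewrite sl factS -sl -abc.
case: (posnP a) => a0.
  rewrite a0 /= fact0; lia.
have an : (a == 0) = false by rewrite eqn0Ngt a0.
rewrite -/a -/b -/c /= mul0n muln0 addn0.
have fP : forall k, 0 < k -> k`! = k * (k.-1)`! by case=> // k _; rewrite factS.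
rewrite (fP a a0).
set F := n`!; set G := (a.-1)`!; set H := b`!.
rewrite !mulnA; nia.
Qed.

Lemma before_index (s : seq T) : uniq s ->
  (forall x y, x \in s -> y \in s -> X x -> Y y -> index x s < index y s) -> before s.
Proof.
elim: s => [|z t IH] //= /andP[zt ut] H.
have Ht : forall x y, x \in t -> y \in t -> X x -> Y y -> index x t < index y t.
  move=> x y xt yt hx hy.
  have := H x y; rewrite !inE xt yt !orbT => /(_ isT isT hx hy) /=.
  have -> : (z == x) = false by apply/negP => /eqP e; rewrite e xt in zt.
  by have -> : (z == y) = false by apply/negP => /eqP e; rewrite e yt in zt.
case: ifP => hz; first exact: IH.
case: ifP => hy; last exact: IH.
apply/hasPn => x xt; apply/negP => hx.
have := H x z; rewrite !inE xt eqxx orbT /= => /(_ isT isT hx hy).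
by case: ifP.
Qed.
End Before.

Section Greedy.
Variable n : nat.
Implicit Types (M : {set edge n}) (e f : edge n) (s : seq (edge n)).

Lemma step_sub M e : M \subset greedy_step M e.
Proof. by rewrite /greedy_step; case: ifP => // _; apply/subsetP => x xM; rewrite !inE xM orbT. Qed.

Lemma fold_mono M s : M \subset foldl (@greedy_step n) M s.
Proof.
elim: s M => [|e s IH] M /=; first exact: subxx.
exact: subset_trans (step_sub M e) (IH _).
Qed.

Lemma fold_sub M s : foldl (@greedy_step n) M s \subset M :|: [set x in s].
Proof.
elim: s M => [|e s IH] M /=; first by rewrite subsetUl.
apply: subset_trans (IH _) _.
rewrite /greedy_step; case: ifP => _; apply/subsetP => x; rewrite !inE;
  by case: (x == e); case: (x \in M); case: (x \in s); rewrite ?orbT.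
Qed.

Lemma matching0 : is_matching (set0 : {set edge n}).
Proof. by apply/forall_inP => e; rewrite inE. Qed.

Lemma fold_match M s : is_matching M -> is_matching (foldl (@greedy_step n) M s).
Proof.
elim: s M => [|e s IH] M //= hM; apply: IH.
by rewrite /greedy_step; case: ifP.
Qed.

Lemma matching1 M f g : is_matching M -> f \in M -> g \in M -> f.1 = g.1 -> f = g.
Proof.
move=> /forall_inP /(_ f) H fM gM e; apply/eqP; apply/negPn/negP => fg.
by move: (forall_inP (H fM) g gM); rewrite fg e eqxx.
Qed.

Lemma matching2 M f g : is_matching M -> f \in M -> g \in M -> f.2 = g.2 -> f = g.
Proof.
move=> /forall_inP /(_ f) H fM gM e; apply/eqP; apply/negPn/negP => fg.
by move: (forall_inP (H fM) g gM); rewrite fg e eqxx andbF.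
Qed.

Lemma conflict M e : is_matching M -> ~~ is_matching (e |: M) ->
  exists2 f, f \in M & (f != e) && ((f.1 == e.1) || (f.2 == e.2)).
Proof.
move=> hM hnot.
case: (boolP [exists f in M, (f != e) && ((f.1 == e.1) || (f.2 == e.2))]).
  by case/exists_inP => f fM H; exists f.
move/exists_inPn => H; exfalso; move/negP: hnot; apply.
apply/forall_inP => x; rewrite !inE => /orP[/eqP->|xM]; apply/forall_inP => y;
  rewrite !inE => /orP[/eqP->|yM]; apply/implyP => xy.
- by rewrite eqxx in xy.
- have := H y yM; rewrite eq_sym in xy; rewrite xy /= negb_or.
  by rewrite ![e.1 == _]eq_sym ![e.2 == _]eq_sym.
- by have := H x xM; rewrite xy /= negb_or.
- by move: (forall_inP (forall_inP hM x xM) y yM); rewrite xy.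
Qed.

Lemma greedy_match s : is_matching (greedy s).
Proof. exact/fold_match/matching0. Qed.

Lemma greedy_sub s : greedy s \subset [set x in s].
Proof. by apply: subset_trans (fold_sub _ _) _; rewrite set0U. Qed.

Lemma rejected s e : uniq s -> e \in s -> e \notin greedy s ->
  exists2 f, f \in greedy s &
    [&& f != e, (f.1 == e.1) || (f.2 == e.2) & index f s < index e s].
Proof.
move=> us es; case/splitPr: es us => s1 s2 us.
have es1 : e \notin s1.
  by move: us; rewrite cat_uniq => /and3P[_ /hasPn/(_ e (mem_head _ _)) + _].
rewrite /greedy foldl_cat /= => nin.
have hm : ~~ is_matching (e |: foldl (@greedy_step n) set0 s1).
  apply/negP => hm; move/negP: nin; apply.
  apply: (subsetP (fold_mono _ _)); rewrite /greedy_step hm; exact: setU11.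
have [f fM /andP[fe fc]] := conflict (greedy_match s1) hm.
exists f.
  apply: (subsetP (fold_mono _ _)); apply: (subsetP (step_sub _ e)); exact: fM.
rewrite fe fc /=.
have fs1 : f \in s1 by have := subsetP (greedy_sub s1) f fM; rewrite inE.
by rewrite !index_cat fs1 (negbTE es1) /= eqxx addn0 index_mem.
Qed.

End Greedy.

Section Z.
Variable n : nat.
Implicit Types (M : {set edge n}) (e f : edge n) (s : seq (edge n)).

Definition i0 : 'I_2 := ord0.
Definition i1 : 'I_2 := ord_max.
Definition eA (j : 'I_n) : edge n := ((i0, j), (i0, j)).
Definition eB (i : 'I_n) : edge n := ((i1, i), (i1, i)).
Definition eC (i j : 'I_n) : edge n := ((i1, i), (i0, j)).

Lemma I2_cases (a : 'I_2) : a = i0 \/ a = i1.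
Proof. by case: a => [[|[|]]] // p; [left|right]; apply: val_inj. Qed.

Lemma ZeA j : Zedge (eA j). Proof. by rewrite /Zedge /= eqxx. Qed.
Lemma ZeB i : Zedge (eB i). Proof. by rewrite /Zedge /= eqxx. Qed.
Lemma ZeC i j : Zedge (eC i j). Proof. by []. Qed.

Lemma Zedge_cases e : Zedge e ->
  [\/ e = eA e.1.2, e = eB e.1.2 | e = eC e.1.2 e.2.2].
Proof.
case: e => [[a i] [b j]]; rewrite /Zedge /=.
case: (I2_cases a) => ->; case: (I2_cases b) => -> /=; rewrite ?orbF ?orbT ?andbF //.
- by move=> /eqP ->; constructor 1.
- by constructor 3.
- by move=> /eqP ->; constructor 2.
Qed.

Lemma Z_left0 e : Zedge e -> e.1.1 = i0 -> e = eA e.1.2.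
Proof. by move=> /Zedge_cases [] ->. Qed.

Lemma Z_right1 e : Zedge e -> e.2.1 = i1 -> e = eB e.2.2.
Proof. by move=> /Zedge_cases [] ->. Qed.

Lemma i01 : (i0 == i1) = false. Proof. by []. Qed.

Lemma eA_inj : injective eA. Proof. by move=> i j [->]. Qed.
Lemma eB_inj : injective eB. Proof. by move=> i j [->]. Qed.

Lemma card_le_inj (A : {set edge n}) (B : {pred 'I_n}) (g : edge n -> 'I_n) :
  {in A &, injective g} -> (forall x, x \in A -> g x \in B) -> #|A| <= #|B|.
Proof.
move=> gi gB; rewrite -(card_in_imset gi); apply: subset_leq_card.
by apply/subsetP => y /imsetP[x xA ->]; apply: gB.
Qed.

Definition Pset M := [set i | eB i \in M].
Definition Qset M := [set j | eA j \in M].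

Lemma size_leP M : is_matching M -> M \subset Zedges n -> #|M| <= n + #|Pset M|.
Proof.
move=> hM MZ.
rewrite -(cardsID [set f | f.2.1 == i0] M).
apply: leq_add.
  apply: (leq_trans _ (eq_leq (card_ord n))); apply: (@card_le_inj _ _ (fun f => f.2.2)) => // f g.
  rewrite !inE => /andP[fM /eqP f0] /andP[gM /eqP g0] e.
  by apply: (matching2 hM fM gM); rewrite [f.2]surjective_pairing [g.2]surjective_pairing f0 g0 e.
apply: (@card_le_inj _ _ (fun f => f.2.2)) => [f g|f].
  rewrite !inE => /andP[/negP f0 fM] /andP[/negP g0 gM] e.
  apply: (matching2 hM fM gM); rewrite [f.2]surjective_pairing [g.2]surjective_pairing e.
  case: (I2_cases f.2.1) => h1; first by rewrite h1 eqxx in f0.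
  case: (I2_cases g.2.1) => h2; first by rewrite h2 eqxx in g0.
  by rewrite h1 h2.
rewrite !inE => /andP[/negP f0 fM].
have fZ : Zedge f by have := subsetP MZ f fM; rewrite inE.
case: (I2_cases f.2.1) => h1; first by rewrite h1 eqxx in f0.
by rewrite -(Z_right1 fZ h1).
Qed.

Lemma size_leQ M : is_matching M -> M \subset Zedges n -> #|M| <= n + #|Qset M|.
Proof.
move=> hM MZ.
rewrite -(cardsID [set f | f.1.1 == i1] M).
apply: leq_add.
  apply: (leq_trans _ (eq_leq (card_ord n))); apply: (@card_le_inj _ _ (fun f => f.1.2)) => // f g.
  rewrite !inE => /andP[fM /eqP f0] /andP[gM /eqP g0] e.
  by apply: (matching1 hM fM gM); rewrite [f.1]surjective_pairing [g.1]surjective_pairing f0 g0 e.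
apply: (@card_le_inj _ _ (fun f => f.1.2)) => [f g|f].
  rewrite !inE => /andP[/negP f0 fM] /andP[/negP g0 gM] e.
  apply: (matching1 hM fM gM); rewrite [f.1]surjective_pairing [g.1]surjective_pairing e.
  case: (I2_cases f.1.1) => h1; last by rewrite h1 eqxx in f0.
  case: (I2_cases g.1.1) => h2; last by rewrite h2 eqxx in g0.
  by rewrite h1 h2.
rewrite !inE => /andP[/negP f0 fM].
have fZ : Zedge f by have := subsetP MZ f fM; rewrite inE.
case: (I2_cases f.1.1) => h1; last by rewrite h1 eqxx in f0.
by rewrite -(Z_left0 fZ h1).
Qed.

End Z.

Section Z2.
Variable n : nat.
Implicit Types (M : {set edge n}) (e f : edge n) (s : seq (edge n)).

Lemma orders_uniq s : s \in orders n -> uniq s.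
Proof. by rewrite mem_permutations => /perm_uniq ->; apply: enum_uniq. Qed.

Lemma orders_mem s e : s \in orders n -> (e \in s) = Zedge e.
Proof. by rewrite mem_permutations => /perm_mem ->; rewrite mem_enum inE. Qed.

Lemma greedy_Z s : s \in orders n -> greedy s \subset Zedges n.
Proof.
move=> so; apply/subsetP => x /(subsetP (greedy_sub s)).
by rewrite !inE (orders_mem _ so).
Qed.

Lemma size_ge s : s \in orders n -> n <= #|greedy s|.
Proof.
move=> so; set M := greedy s.
apply: (leq_trans _ (leq_imset_card (fun f : edge n => f.2) M)).
apply: (@leq_trans #|[set (i0, j) | j : 'I_n]|).
  by rewrite card_imset ?card_ord // => i j [].
apply: subset_leq_card; apply/subsetP => _ /imsetP[j _ ->].
case: (boolP (eA j \in M)) => hj.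
  by apply/imsetP; exists (eA j).
have [f fM /and3P[fe fc _]] := rejected (orders_uniq so) (eq_ind_r _ (ZeA j) (orders_mem _ so)) hj.
apply/imsetP; exists f => //.
have fZ : Zedge f by have := subsetP (greedy_Z so) f fM; rewrite inE.
case/orP: fc => /eqP fc; last by rewrite fc.
by move: fe; rewrite (Z_left0 fZ) ?fc // /eA /= eqxx.
Qed.

Lemma cross s i j : s \in orders n -> eB i \in greedy s -> eA j \in greedy s ->
  (index (eB i) s < index (eC i j) s) || (index (eA j) s < index (eC i j) s).
Proof.
move=> so hi hj; set M := greedy s.
have hM : is_matching M := greedy_match s.
have nC : eC i j \notin M.
  apply/negP => hc; have := matching1 hM hi hc erefl; by [].
have [f fM /and3P[fe fc fi]] := rejected (orders_uniq so) (eq_ind_r _ (ZeC i j) (orders_mem _ so)) nC.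
case/orP: fc => /eqP fc.
  by rewrite -(matching1 hM fM hi fc) fi.
by rewrite -(matching2 hM fM hj fc) fi orbT.
Qed.

End Z2.

Lemma ivt_nat (f : nat -> nat) h T : f 0 = 0 -> (forall t, f t.+1 <= (f t).+1) ->
  h <= f T -> exists t, f t = h.
Proof.
move=> f0 fS; elim: T => [|T IH] hT.
  by exists 0; rewrite f0; move: hT; rewrite f0; case: h.
case: (leqP h (f T)) => [/IH//|lt]; exists T.+1.
by apply/eqP; rewrite eqn_leq hT andbT; apply: leq_trans (fS T) _.
Qed.

Lemma sub_card (T : finType) (A : {set T}) h : h <= #|A| -> exists2 S : {set T}, S \subset A & #|S| = h.
Proof.
move=> hA; exists [set x in take h (enum A)].
  by apply/subsetP => x; rewrite inE => /mem_take; rewrite mem_enum.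
rewrite cardsE.
have /card_uniqP -> : uniq (take h (enum A)) by rewrite take_uniq ?enum_uniq.
by rewrite size_takel // -cardE.
Qed.

Section Split.
Variable n : nat.
Lemma split_set (A : {set 'I_n}) (pos : 'I_n -> nat) h : injective pos -> 2 * h <= #|A| ->
  exists t, #|A :&: [set i | pos i < t]| = h /\ h <= #|A :\: [set i | pos i < t]|.
Proof.
move=> pi hA.
pose f t := #|A :&: [set i | pos i < t]|.
have f0 : f 0 = 0.
  by apply/eqP; rewrite cards_eq0; apply/eqP/setP => i; rewrite !inE ltn0 andbF.
have fS t : f t.+1 <= (f t).+1.
  rewrite /f; apply: (leq_trans (subset_leq_card (_ : _ \subset
     (A :&: [set i | pos i < t]) :|: [set i | pos i == t]))).
    by apply/subsetP => i; rewrite !inE ltnS leq_eqVlt => /andP[-> /orP[->|->]]; rewrite ?orbT.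
  apply: (leq_trans (leq_card_setU _ _)); rewrite -addn1 leq_add2l.
  by apply/card_le1_eqP => i j; rewrite !inE => /eqP <- /eqP /pi.
pose T := \max_(i : 'I_n) (pos i).+1.
have fT : f T = #|A|.
  rewrite /f; apply: eq_card => i; rewrite !inE.
  by rewrite (leq_bigmax (F := fun i => (pos i).+1) i) andbT.
have hT : h <= f T by rewrite fT; lia.
have [t ft] := @ivt_nat f h T f0 fS hT.
exists t; split => //.
move: ft; rewrite /f => ft.
have := cardsID [set i | pos i < t] A; rewrite ft => e; move: hA; rewrite -e; set u := #|_ :\: _|; lia.
Qed.
End Split.


Arguments eA {n}.
Arguments eB {n}.
Arguments eC {n}.
Arguments Pset {n}.
Arguments Qset {n}.
Section Bad.
Variable n : nat.
Implicit Types (M : {set edge n}) (e f : edge n) (s : seq (edge n)).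

Definition Xe (b : bool) (S : {set 'I_n}) : {set edge n} := if b then eB @: S else eA @: S.
Definition Yc (S2 S3 : {set 'I_n}) : {set edge n} := [set eC p.1 p.2 | p in setX S2 S3].
Definition bad h s := (2 * h <= #|Pset (greedy s)|) && (2 * h <= #|Qset (greedy s)|).

Lemma XYdisj b S1 S2 S3 e : e \in Xe b S1 -> e \in Yc S2 S3 -> false.
Proof.
rewrite /Xe /Yc; case: b => /imsetP[i _ ->] /imsetP[p _] //.
Qed.

Lemma index_inj s x y : x \in s -> y \in s -> index x s = index y s -> x = y.
Proof. by move=> xs ys e; rewrite -(nth_index x xs) e nth_index. Qed.

Lemma bad_before h s : s \in orders n -> bad h s ->
  exists b (S1 S2 S3 : {set 'I_n}), [&& #|S1| == h, #|S2| == h, #|S3| == h &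
    before (fun e => e \in Xe b S1) (fun e => e \in Yc S2 S3) s].
Proof.
move=> so /andP[hP hQ]; set M := greedy s in hP hQ.
have us := orders_uniq so.
have inS e : Zedge e -> e \in s by rewrite (orders_mem _ so).
pose posB i := index (eB i) s; pose posA j := index (eA j) s.
have iB : injective posB.
  by move=> i k /index_inj e; apply: eB_inj; apply: e; apply: inS; rewrite ?ZeB.
have iA : injective posA.
  by move=> i k /index_inj e; apply: eA_inj; apply: e; apply: inS; rewrite ?ZeA.
have [tP [cLP cHP]] := split_set iB hP.
have [tQ [cLQ cHQ]] := split_set iA hQ.
have [S2 S2H cS2] := sub_card cHP.
have [S3 S3H cS3] := sub_card cHQ.
have S2P i : i \in S2 -> (eB i \in M) && (tP <= posB i).
  by move/(subsetP S2H); rewrite !inE -leqNgt andbC.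
have S3Q j : j \in S3 -> (eA j \in M) && (tQ <= posA j).
  by move/(subsetP S3H); rewrite !inE -leqNgt andbC.
have Ypos y : y \in Yc S2 S3 -> exists i j, [/\ y = eC i j, i \in S2 & j \in S3].
  by case/imsetP => p; rewrite inE => /andP[h2 h3] ->; exists p.1, p.2.
have key y : y \in Yc S2 S3 -> minn tP tQ < index y s.
  case/Ypos => i [j [-> /S2P/andP[bi ti] /S3Q/andP[aj tj]]].
  have := cross so bi aj; rewrite -/(posB i) -/(posA j).
  case/orP => hh; rewrite gtn_min; apply/orP;
    [left; exact: leq_ltn_trans ti hh | right; exact: leq_ltn_trans tj hh].
case: (leqP tP tQ) => ht.
  exists true, (Pset M :&: [set i | posB i < tP]), S2, S3.
  rewrite cLP cS2 cS3 !eqxx /=.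
  apply: (before_index us) => x y xs ys.
  move=> /imsetP[i]; rewrite !inE => /andP[_ li] -> /key.
  by rewrite (minn_idPl ht) => hk; exact: ltn_trans li hk.
exists false, (Qset M :&: [set j | posA j < tQ]), S2, S3.
rewrite cLQ cS2 cS3 !eqxx /=.
apply: (before_index us) => x y xs ys.
move=> /imsetP[j]; rewrite !inE => /andP[_ lj] -> /key.
by rewrite (minn_idPr (ltnW ht)) => hk; exact: ltn_trans lj hk.
Qed.

End Bad.

Lemma fact_le_exp k : k`! <= k ^ k.
Proof.
elim: k => // k IH; rewrite factS expnS leq_mul2l /=.
apply: leq_trans IH _; case: k => // k; by rewrite leq_exp2r.
Qed.

Lemma fact_add m k : m`! * m ^ k <= (m + k)`!.
Proof.
elim: k => [|k IH]; first by rewrite muln1 addn0.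
rewrite expnS addnS factS mulnCA.
by apply: leq_mul => //; apply: leq_trans (leq_addr k m) (leqnSn _).
Qed.

Lemma count_union (T : eqType) (I : finType) (P : pred T) (C : pred I) (Q : I -> pred T) (s : seq T) :
  (forall x, x \in s -> P x -> exists2 i, C i & Q i x) -> count P s <= \sum_(i | C i) count (Q i) s.
Proof.
elim: s => [|x s IH] H /=; first by [].
rewrite big_split /=; apply: leq_add; last first.
  by apply: IH => y ys; apply: H; rewrite inE ys orbT.
case: (boolP (P x)) => // px.
have [i ci qi] := H x (mem_head _ _) px.
by rewrite (bigD1 i) //= qi leq_addr.
Qed.

Arguments Xe {n}.
Arguments Yc {n}.
Arguments bad {n}.
Section Count.
Variable n : nat.
Local Notation N := (size (enum (Zedges n))).

Lemma count_enumZ (A : {set edge n}) : A \subset Zedges n ->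
  count (fun e => e \in A) (enum (Zedges n)) = #|A|.
Proof.
move=> AZ; rewrite -size_filter.
have /card_uniqP <- : uniq [seq e <- enum (Zedges n) | e \in A] by rewrite filter_uniq ?enum_uniq.
apply: eq_card => x; rewrite mem_filter mem_enum /=.
by case: (boolP (x \in A)) => //= xA; rewrite (subsetP AZ).
Qed.

Lemma card_Xe b (S : {set 'I_n}) : #|Xe b S| = #|S|.
Proof. by case: b; rewrite /Xe card_imset //; [exact: eB_inj | exact: eA_inj]. Qed.

Lemma card_Yc (S2 S3 : {set 'I_n}) : #|Yc S2 S3| = #|S2| * #|S3|.
Proof.
rewrite /Yc card_imset ?cardsX // => [[i j] [i' j']] /= [-> ->] //.
Qed.

Lemma Xe_Z b (S : {set 'I_n}) : Xe b S \subset Zedges n.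
Proof.
by case: b; apply/subsetP => _ /imsetP[i _ ->]; rewrite inE ?ZeA ?ZeB.
Qed.

Lemma Yc_Z (S2 S3 : {set 'I_n}) : Yc S2 S3 \subset Zedges n.
Proof. by apply/subsetP => _ /imsetP[p _ ->]; rewrite inE ZeC. Qed.

Lemma count_term b (S1 S2 S3 : {set 'I_n}) h : #|S1| = h -> #|S2| = h -> #|S3| = h ->
  count (before (fun e => e \in Xe b S1) (fun e => e \in Yc S2 S3)) (orders n) * h ^ h <= N`!.
Proof.
move=> c1 c2 c3.
have := @count_before _ (fun e => e \in Xe b S1) (fun e => e \in Yc S2 S3)
   (fun x hx hy => XYdisj hx hy) _ (enum (Zedges n)) erefl (enum_uniq _).
rewrite count_enumZ ?Xe_Z // count_enumZ ?Yc_Z // card_Xe card_Yc c1 c2 c3 -/(orders n).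
set c := count _ _ => E.
have pos : 0 < h`! * (h * h)`! by rewrite muln_gt0 !fact_gt0.
rewrite -(leq_pmul2r pos) !mulnA -E.
rewrite -!mulnA leq_mul2l; apply/orP; right.
apply: leq_trans (_ : (h * h)`! * (h * h) ^ h <= _); last by rewrite addnC fact_add.
rewrite expnMn; have := fact_le_exp h.
set A := h ^ h; set F := h`!; set G := (h * h)`! => FA.
by rewrite mulnA [G * _]mulnC leq_mul2r leq_mul2l FA !orbT.
Qed.

Lemma card_setI : #|{set 'I_n}| = 2 ^ n.
Proof. by rewrite -cardsT -powersetT card_powerset cardsT card_ord. Qed.

Lemma count_bad h : count (bad h) (orders n) * h ^ h <= 2 * 2 ^ n * 2 ^ n * 2 ^ n * N`!.
Proof.
pose I := (bool * {set 'I_n} * {set 'I_n} * {set 'I_n})%type.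
pose C (q : I) := [&& #|q.1.1.2| == h, #|q.1.2| == h & #|q.2| == h].
pose Q (q : I) := before (fun e => e \in Xe q.1.1.1 q.1.1.2) (fun e => e \in Yc q.1.2 q.2).
have H : count (bad h) (orders n) <= \sum_(q | C q) count (Q q) (orders n).
  apply: count_union.
  move=> s so /(bad_before so) [b [S1 [S2 [S3 /and4P[c1 c2 c3 bf]]]]].
  by exists (b, S1, S2, S3); rewrite /C /= ?c1 ?c2 ?c3.
apply: leq_trans (leq_mul H (leqnn (h ^ h))) _.
rewrite big_distrl /=.
apply: leq_trans (_ : \sum_(q : I) N`! <= _).
  rewrite [X in _ <= X](bigID C) /=; apply: leq_trans (leq_addr _ _).
  apply: leq_sum => q /and3P[/eqP c1 /eqP c2 /eqP c3]; exact: count_term.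
rewrite sum_nat_const /I !card_prod card_bool card_setI.
by [].
Qed.

End Count.

Section Final.
Variable n : nat.

Lemma size_le_bad s h : s \in orders n -> #|greedy s| <= n + 2 * h + n * bad h s.
Proof.
move=> so.
have hP := size_leP (greedy_match s) (greedy_Z so).
have hQ := size_leQ (greedy_match s) (greedy_Z so).
have cP : #|Pset (greedy s)| <= n by rewrite -[X in _ <= X]card_ord max_card.
rewrite /bad; case: (leqP (2 * h) #|Pset (greedy s)|) => h1;
  case: (leqP (2 * h) #|Qset (greedy s)|) => h2 /=;
  move: hP hQ cP h1 h2; set p := #|Pset _|; set q := #|Qset _|; set g := #|greedy s|; lia.
Qed.

Lemma sum_split (r : seq (seq (edge n))) c (f : seq (edge n) -> nat) :
  \sum_(x <- r) (c + f x) = size r * c + \sum_(x <- r) f x.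
Proof. elim: r => [|x r IH]; rewrite ?big_nil ?big_cons //= IH mulSn; lia. Qed.

Lemma sum_countn (r : seq (seq (edge n))) (a : pred (seq (edge n))) :
  \sum_(x <- r) (n * a x) = n * count a r.
Proof. elim: r => [|x r IH]; rewrite ?big_nil ?big_cons ?muln0 //= IH; lia. Qed.

Lemma sum_upper h :
  (\sum_(s <- orders n) #|greedy s|) * h ^ h <=
  (size (enum (Zedges n)))`! * (n + 2 * h) * h ^ h + n * (2 * 2 ^ n * 2 ^ n * 2 ^ n * (size (enum (Zedges n)))`!).
Proof.
have so : size (orders n) = (size (enum (Zedges n)))`! by rewrite size_permutations ?enum_uniq.
have H1 : \sum_(s <- orders n) #|greedy s| <= size (orders n) * (n + 2 * h) + n * count (bad h) (orders n).
  rewrite -sum_countn -sum_split big_seq_cond [X in _ <= X]big_seq_cond.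
  by apply: leq_sum => s /andP[so' _]; exact: size_le_bad.
apply: leq_trans (leq_mul H1 (leqnn _)) _.
rewrite mulnDl so -mulnA leq_add2l mulnAC -mulnA leq_mul2l; apply/orP; right.
by rewrite mulnC; exact: count_bad.
Qed.

Lemma sum_lower :
  (size (enum (Zedges n)))`! * n <= \sum_(s <- orders n) #|greedy s|.
Proof.
rewrite -size_permutations ?enum_uniq // -/(orders n).
elim: (orders n) (@size_ge n) => [|s r IH] H; rewrite ?big_nil ?big_cons //=.
rewrite mulSn leq_add ?H ?mem_head //; by apply: IH => t tr; apply: H; rewrite inE tr orbT.
Qed.

Lemma opt_size_eq : opt_size n = 2 * n.
Proof.
apply/eqP; rewrite eqn_leq; apply/andP; split.
  apply/bigmax_leqP => M /andP[_ hM].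
  apply: (@leq_trans #|[set: vtx n]|); last by rewrite cardsT card_prod !card_ord.
  have inj : {in M &, injective (fun f : edge n => f.1)}.
    by move=> f g fM gM; apply: matching1 hM fM gM.
  rewrite -(card_in_imset inj); exact: subset_leq_card (subsetT _).
pose M0 := [set eA j | j : 'I_n] :|: [set eB i | i : 'I_n].
have c0 : #|M0| = 2 * n.
  rewrite cardsU !card_imset ?card_ord; try (by move=> ? ? []).
  suff -> : [set eA j | j : 'I_n] :&: [set eB i | i : 'I_n] = set0 by rewrite cards0; lia.
  by apply/setP => e; rewrite !inE; apply/negP => /andP[/imsetP[j _ ->] /imsetP[i _]].
rewrite -c0; apply: (leq_bigmax_cond M0); apply/andP; split.
  by apply/subsetP => e; rewrite !inE => /orP[] /imsetP[i _ ->]; rewrite ?ZeA ?ZeB.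
apply/forall_inP => f; rewrite inE => /orP[] /imsetP[i _ ->]; apply/forall_inP => g;
  rewrite inE => /orP[] /imsetP[j _ ->]; apply/implyP => ne /=;
  rewrite ?andbT //.
- by apply/andP; split; apply: contra ne => /eqP[->].
- by apply/andP; split; apply: contra ne => /eqP[->].
Qed.

End Final.


Lemma ev_bound K : 0 < K -> exists M0, forall m, M0 <= m -> 8 ^ m * K <= (m %/ K) ^ (m %/ K).
Proof.
move=> K0; pose B := 16 ^ (2 * K).
exists ((B + K) * K) => m hm.
set h := m %/ K.
have hB : B + K <= h by rewrite /h leq_divRL.
have h1 : 0 < h by apply: leq_trans hB; rewrite addn_gt0 K0 orbT.
have mlt : m <= 2 * K * h.
  have := divn_eq m K; have := ltn_pmod m K0; rewrite -/h => lt e.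
  have : K <= h * K by rewrite leq_pmull.
  lia.
apply: (@leq_trans (8 ^ (2 * K * h) * 2 ^ (2 * K * h))).
  apply: leq_mul; first exact: leq_pexp2l.
  apply: ltnW; apply: leq_trans (ltn_expl K (isT : 1 < 2)) _.
  apply: leq_pexp2l => //; apply: leq_trans mlt; rewrite -/h.
  have : K <= h * K by rewrite leq_pmull.
  lia.
rewrite -expnMn expnM -/B leq_exp2r //.
apply: leq_trans hB; exact: leq_addr.
Qed.

Lemma final_nat m K h : 0 < K -> h * K <= m -> 8 ^ m * K <= h ^ h ->
  (\sum_(s <- orders m) #|greedy s|) * K <= (size (enum (Zedges m)))`! * m * (K + 4).
Proof.
move=> K0 hK hb.
set S := \sum_(s <- orders m) #|greedy s|; set F := (size (enum (Zedges m)))`!.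
have U := sum_upper m h; rewrite -/S -/F in U.
have e8 : 2 * 2 ^ m * 2 ^ m * 2 ^ m * F = 2 * F * 8 ^ m.
  rewrite (_ : 8 = 2 * 2 * 2) // !expnMn; set t := 2 ^ m; nia.
rewrite e8 in U.
have hh : 0 < h ^ h by rewrite expn_gt0; case: h {hK hb U}.
rewrite -(leq_pmul2r hh).
have U2 : S * h ^ h * K <= F * (m + 2 * h) * h ^ h * K + m * (2 * F * (8 ^ m * K)).
  have := leq_mul U (leqnn K); rewrite mulnDl; lia.
rewrite mulnAC; apply: leq_trans U2 _.
have U3 : m * (2 * F * (8 ^ m * K)) <= m * (2 * F * h ^ h) by rewrite !leq_mul.
apply: leq_trans (leq_add (leqnn _) U3) _.
set H := h ^ h.
have : (m + 2 * h) * K <= m * K + 2 * m by lia.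
move=> hk.
have -> : F * (m + 2 * h) * H * K + m * (2 * F * H) = (F * H) * ((m + 2 * h) * K + 2 * m).
  by lia.
have -> : F * m * (K + 4) * H = (F * H) * (m * K + 2 * m + 2 * m) by lia.
by rewrite leq_mul2l leq_add2r hk orbT.
Qed.

From mathcomp Require Import all_classical all_reals all_analysis.
From mathcomp Require Import ring lra.
Import Order.TTheory GRing.Theory Num.Theory numFieldNormedType.Exports.
Local Open Scope classical_set_scope.
Local Open Scope ring_scope.

Theorem lemma10 (R : realType) :
  (fun n : nat => expected_greedy R n.+1 / (opt_size n.+1)%:R) @ \oo --> (2^-1 : R).
Proof.
apply/cvgrPdist_lt => eps eps0.
pose K := (Num.Def.archi_bound (4 / eps)).+1.
have K0 : (0 < K)%N by [].
have KB : 4 / eps < K%:R.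
  apply: lt_le_trans (archi_boundP _) _; first by rewrite divr_ge0 // ltW.
  by rewrite ler_nat.
have [M0 HM0] := ev_bound K0.
exists M0 => // n /= hn.
set m := n.+1.
set h := (m %/ K)%N.
have hK : (h * K <= m)%N by rewrite /h leq_trunc_div.
have hb : (8 ^ m * K <= h ^ h)%N by apply: HM0; apply: leq_trans hn _.
have U := final_nat K0 hK hb.
have L := sum_lower m.
rewrite /expected_greedy opt_size_eq -natr_sum size_permutations ?enum_uniq //.
set S := (\sum_(s <- orders m) #|greedy s|)%N in U L *.
set F := ((size (enum (Zedges m)))`!)%N in U L *.
have Fp : 0 < F%:R :> R by rewrite ltr0n fact_gt0.
have mp : 0 < m%:R :> R by rewrite ltr0n.
have kp : 0 < K%:R :> R by rewrite ltr0n.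
have Lr : F%:R * m%:R <= S%:R :> R by rewrite -natrM ler_nat.
have Ur : S%:R * K%:R <= F%:R * m%:R * (K%:R + 4) :> R.
  by rewrite -[4]/(4%:R) -natrD -!natrM ler_nat.
have -> : S%:R / F%:R / (2 * m)%:R = S%:R / (F%:R * (2 * m%:R)) :> R.
  by rewrite natrM -mulrA -invfM.
have D : 0 < F%:R * (2 * m%:R) :> R by rewrite mulr_gt0 // mulr_gt0.
have hx1 : 2^-1 <= S%:R / (F%:R * (2 * m%:R)) :> R.
  rewrite ler_pdivlMr //; lra.
have H : S%:R <= F%:R * m%:R + 4 * (F%:R * m%:R) / K%:R :> R.
  rewrite -(ler_pM2r kp) mulrDl mulrAC divfK ?gt_eqF //; lra.
have hx2 : S%:R / (F%:R * (2 * m%:R)) <= 2^-1 + 2 / K%:R :> R.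
  rewrite ler_pdivrMr //; apply: le_trans H _.
  have kn : K%:R != 0 :> R by rewrite gt_eqF.
  have -> : (2^-1 + 2 / K%:R) * (F%:R * (2 * m%:R)) = F%:R * m%:R + 4 * (F%:R * m%:R) / K%:R :> R.
    by field.
  by [].
have ke : 2 / K%:R < eps.
  rewrite ltr_pdivrMr //; move: KB; rewrite ltr_pdivrMr //; lra.
rewrite ler0_norm; last by lra.
lra.
Qed.
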